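(* Let $(A,\cdot,\alpha)$ be an anticommutative multiplicative Hom-algebra over a field $\mathbb{K}$ of characteristic $0$. Then: (i) $J_{\alpha}(x,y,z)$ is skew-symmetric in its three variables; (ii) for all $w,x,y,z\in A$, $$\alpha^{2}(w)\cdot J_{\alpha}(x,y,z)-\alpha^{2}(x)\cdot J_{\alpha}(y,z,w)+\alpha^{2}(y)\cdot J_{\alpha}(z,w,x)-\alpha^{2}(z)\cdot J_{\alpha}(w,x,y)$$ $$= J_{\alpha}(w\cdot x,\alpha(y),\alpha(z))+J_{\alpha}(y\cdot z,\alpha(w),\alpha(x))+J_{\alpha}(w\cdot y,\alpha(z),\alpha(x))+J_{\alpha}(z\cdot x,\alpha(w),\alpha(y))-J_{\alpha}(z\cdot w,\alpha(x),\alpha(y))-J_{\alpha}(x\cdot y,\alpha(z),\alpha(w)).$$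
   Context: A multiplicative Hom-algebra is a triple $(A,\cdot,\alpha)$ with $A$ a vector space over $\mathbb{K}$, $\cdot$ a bilinear product, and $\alpha:A\to A$ linear with $\alpha(x\cdot y)=\alpha(x)\cdot\alpha(y)$. Anticommutative means $x\cdot y=-y\cdot x$. The Hom-Jacobian is $J_{\alpha}(x,y,z)=(x\cdot y)\cdot\alpha(z)+(y\cdot z)\cdot\alpha(x)+(z\cdot x)\cdot\alpha(y)$. *)

(* Defs.v *)
From HB Require Import structures.
From mathcomp Require Import all_boot all_order all_algebra.
Set Implicit Arguments. Unset Strict Implicit. Unset Printing Implicit Defensive.
Import GRing.Theory.
Local Open Scope ring_scope.

Definition bilinear_prod (K : fieldType) (A : lmodType K) (mul : A -> A -> A) :=
  (forall a x y z, mul (a *: x + y) z = a *: mul x z + mul y z) /\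
  (forall a x y z, mul x (a *: y + z) = a *: mul x y + mul x z).

Definition hom_multiplicative (A : Type) (mul : A -> A -> A) (alpha : A -> A) :=
  forall x y, alpha (mul x y) = mul (alpha x) (alpha y).

Definition anticommutative (K : fieldType) (A : lmodType K) (mul : A -> A -> A) :=
  forall x y, mul x y = - mul y x.

Definition homJ (K : fieldType) (A : lmodType K) (mul : A -> A -> A)
  (alpha : A -> A) (x y z : A) : A :=
  mul (mul x y) (alpha z) + mul (mul y z) (alpha x) + mul (mul z x) (alpha y).

(* Main.v *)
Require Import Defs.
From HB Require Import structures.
From mathcomp Require Import all_boot all_order all_algebra.
Import GRing.Theory.
Local Open Scope ring_scope.
Set Implicit Arguments. Unset Strict Implicit.

Inductive tree := TL of nat & nat | TN of tree & tree.
Inductive ex := At of nat | Ad of ex & ex | Op of ex | Ze | Mu of ex & ex | Al of ex.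

Fixpoint cmpn (a b : nat) : comparison :=
  match a, b with
  | 0, 0 => Eq | 0, _ => Lt | _, 0 => Gt | S a, S b => cmpn a b end.

Fixpoint cmp (s t : tree) : comparison :=
  match s, t with
  | TL i k, TL j l => match cmpn i j with Eq => cmpn k l | c => c end
  | TL _ _, TN _ _ => Lt
  | TN _ _, TL _ _ => Gt
  | TN a b, TN c d => match cmp a c with Eq => cmp b d | r => r end
  end.

Lemma cmpn_eq a b : cmpn a b = Eq -> a = b.
Proof. elim: a b => [|a IH] [|b] //= H; by rewrite (IH b H). Qed.

Lemma cmp_eq s t : cmp s t = Eq -> s = t.
Proof.
elim: s t => [i k|a IHa b IHb] [j l|c d] //=.
  by case E: (cmpn i j) => // H; rewrite (cmpn_eq E) (cmpn_eq H).
by case E: (cmp a c) => // H; rewrite (IHa _ E) (IHb _ H).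
Qed.

Definition mkN (p q : int * tree) : int * tree :=
  match cmp p.2 q.2 with
  | Eq => (0, p.2)
  | Lt => (p.1 * q.1, TN p.2 q.2)
  | Gt => (- (p.1 * q.1), TN q.2 p.2)
  end.

Fixpoint canonT (t : tree) : int * tree :=
  match t with
  | TL i k => (1, TL i k)
  | TN a b => mkN (canonT a) (canonT b)
  end.

Fixpoint alphaT (t : tree) : tree :=
  match t with TL i k => TL i k.+1 | TN a b => TN (alphaT a) (alphaT b) end.

Fixpoint ins (c : int) (t : tree) (l : seq (int * tree)) : seq (int * tree) :=
  match l with
  | [::] => if c == 0 then [::] else [:: (c, t)]
  | (d, u) :: l' =>
    match cmp t u with
    | Eq => if c + d == 0 then l' else (c + d, u) :: l'
    | Lt => if c == 0 then l else (c, t) :: l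
    | Gt => (d, u) :: ins c t l'
    end
  end.

Definition addT (p : int * tree) (l : seq (int * tree)) :=
  let q := canonT p.2 in ins (p.1 * q.1) q.2 l.

Fixpoint norm (e : ex) : seq (int * tree) :=
  match e with
  | At i => [:: (1, TL i 0)]
  | Ze => [::]
  | Ad a b => foldr addT (norm b) (norm a)
  | Op a => foldr addT [::] [seq (- p.1, p.2) | p <- norm a]
  | Al a => foldr addT [::] [seq (p.1, alphaT p.2) | p <- norm a]
  | Mu a b => let nb := norm b in
      foldr (fun p acc => foldr (fun q acc' => addT (p.1 * q.1, TN p.2 q.2) acc') acc nb)
            [::] (norm a)
  end.

Section Sound.
Variables (K : fieldType) (A : lmodType K) (mul : A -> A -> A) (alpha : {linear A -> A}).
Hypothesis hchar : [pchar K] =i pred0.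
Hypothesis hbil : bilinear_prod mul.
Hypothesis hmult : hom_multiplicative mul alpha.
Hypothesis hanti : anticommutative mul.
Variable env : seq A.

Lemma mulDl x y z : mul (x + y) z = mul x z + mul y z.
Proof. by have := (proj1 hbil) 1 x y z; rewrite !scale1r. Qed.
Lemma mulDr x y z : mul x (y + z) = mul x y + mul x z.
Proof. by have := (proj2 hbil) 1 x y z; rewrite !scale1r. Qed.
Lemma mul0l z : mul 0 z = 0.
Proof. by apply: (addrI (mul 0 z)); rewrite -mulDl !addr0. Qed.
Lemma mul0r z : mul z 0 = 0.
Proof. by apply: (addrI (mul z 0)); rewrite -mulDr !addr0. Qed.
Lemma mulNl x y : mul (- x) y = - mul x y.
Proof. by apply: (addrI (mul x y)); rewrite -mulDl !subrr mul0l. Qed.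
Lemma mulNr x y : mul x (- y) = - mul x y.
Proof. by apply: (addrI (mul x y)); rewrite -mulDr !subrr mul0r. Qed.
Lemma mulzl x y (c : int) : mul (x *~ c) y = mul x y *~ c.
Proof.
have h : forall n : nat, mul (x *+ n) y = mul x y *+ n.
  by elim=> [|n IH]; rewrite ?mulr0n ?mul0l // !mulrS mulDl IH.
by case: c => n; rewrite ?NegzE ?mulrNz ?mulNl ?h.
Qed.
Lemma mulzr x y (c : int) : mul x (y *~ c) = mul x y *~ c.
Proof.
have h : forall n : nat, mul x (y *+ n) = mul x y *+ n.
  by elim=> [|n IH]; rewrite ?mulr0n ?mul0r // !mulrS mulDr IH.
by case: c => n; rewrite ?NegzE ?mulrNz ?mulNr ?h.
Qed.
Lemma mulxx x : mul x x = 0.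
Proof.
have h2 : (2%:R : K) != 0.
  by move/pcharf0P: (hchar) => ->.
have : (2%:R : K) *: mul x x = 0.
  by rewrite scaler_nat mulr2n {1}hanti addNr.
by move/eqP; rewrite scaler_eq0 (negbTE h2) /= => /eqP.
Qed.

Fixpoint teval (t : tree) : A :=
  match t with
  | TL i k => iter k alpha (nth 0 env i)
  | TN a b => mul (teval a) (teval b)
  end.

Fixpoint eval (e : ex) : A :=
  match e with
  | At i => nth 0 env i
  | Ad a b => eval a + eval b
  | Op a => - eval a
  | Ze => 0
  | Mu a b => mul (eval a) (eval b)
  | Al a => alpha (eval a)
  end.

Definition evalL (l : seq (int * tree)) : A :=
  foldr (fun p acc => teval p.2 *~ p.1 + acc) 0 l.

Lemma mkN_ok p q : mul (teval p.2 *~ p.1) (teval q.2 *~ q.1)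
   = teval (mkN p q).2 *~ (mkN p q).1.
Proof.
rewrite /mkN mulzl mulzr -mulrzA.
case E: (cmp p.2 q.2) => /=.
- by rewrite (cmp_eq E) mulxx mul0rz mulr0z.
- by rewrite mulrC.
- by rewrite hanti mulNrz mulrNz mulrC.
Qed.

Lemma canonT_ok t : teval t = teval (canonT t).2 *~ (canonT t).1.
Proof.
elim: t => [i k|a IHa b IHb] /=; first by rewrite mulr1z.
by rewrite -mkN_ok -IHa -IHb.
Qed.

Lemma ins_ok c t l : evalL (ins c t l) = teval t *~ c + evalL l.
Proof.
elim: l => [|[d u] l IH] /=.
  by case: eqP => [->|_] /=; rewrite ?mulr0z ?add0r.
case E: (cmp t u) => /=.
- rewrite (cmp_eq E); case: eqP => [H|_] /=; rewrite addrA -mulrzDr ?H ?mulr0z ?add0r //.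
- by case: eqP => [->|_] /=; rewrite ?mulr0z ?add0r.
- by rewrite IH addrCA.
Qed.

Lemma addT_ok p l : evalL (addT p l) = teval p.2 *~ p.1 + evalL l.
Proof. by rewrite /addT /= ins_ok [teval p.2]canonT_ok -mulrzA mulrC. Qed.

Lemma foldr_addT l acc : evalL (foldr addT acc l) = evalL l + evalL acc.
Proof. by elim: l => [|p l IH] /=; rewrite ?add0r // addT_ok IH addrA. Qed.

Lemma alphaT_ok t : teval (alphaT t) = alpha (teval t).
Proof. by elim: t => [i k|a IHa b IHb] //=; rewrite hmult IHa IHb. Qed.

Lemma inner_ok (p : int * tree) nb acc :
  evalL (foldr (fun q acc' => addT (p.1 * q.1, TN p.2 q.2) acc') acc nb)
  = mul (teval p.2 *~ p.1) (evalL nb) + evalL acc.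
Proof.
elim: nb => [|q l IH] /=; first by rewrite mul0r add0r.
rewrite addT_ok IH mulDr /= addrA; congr (_ + _ + _); by rewrite mulzr mulzl -mulrzA mulrC.
Qed.

Lemma norm_ok e : eval e = evalL (norm e).
Proof.
elim: e => [i|a IHa b IHb|a IHa||a IHa b IHb|a IHa] /=.
- by rewrite mulr1z addr0.
- by rewrite foldr_addT IHa IHb.
- rewrite foldr_addT /= addr0 IHa; elim: (norm a) => [|p l IH] /=; rewrite ?oppr0 //.
  by rewrite opprD IH mulrNz.
- by [].
- rewrite IHa IHb; elim: (norm a) => [|p l IH] /=; first by rewrite mul0l.
  by rewrite inner_ok mulDl IH.
- rewrite foldr_addT /= addr0 IHa; elim: (norm a) => [|p l IH] /=; first by rewrite raddf0.
  by rewrite -IH alphaT_ok -raddfMz -raddfD.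
Qed.

Lemma sound e1 e2 : norm e1 = norm e2 -> eval e1 = eval e2.
Proof. by move=> H; rewrite !norm_ok H. Qed.

End Sound.

Ltac lookup x l :=
  lazymatch l with
  | nil => constr:(false)
  | cons x _ => constr:(0%N)
  | cons _ ?l' =>
      let r := lookup x l' in
      lazymatch r with false => constr:(false) | _ => constr:(S r) end
  end.

Ltac reify mul alpha t l :=
  lazymatch t with
  | (?a + ?b)%R => let p := reify mul alpha a l in
      lazymatch p with (?ea, ?l1) => let q := reify mul alpha b l1 in
      lazymatch q with (?eb, ?l2) => constr:((Ad ea eb, l2)) end end
  | (- ?a)%R => let p := reify mul alpha a l in
      lazymatch p with (?ea, ?l1) => constr:((Op ea, l1)) end
  | 0%R => constr:((Ze, l))
  | mul ?a ?b => let p := reify mul alpha a l in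
      lazymatch p with (?ea, ?l1) => let q := reify mul alpha b l1 in
      lazymatch q with (?eb, ?l2) => constr:((Mu ea eb, l2)) end end
  | alpha ?a => let p := reify mul alpha a l in
      lazymatch p with (?ea, ?l1) => constr:((Al ea, l1)) end
  | _ => let r := lookup t l in
      lazymatch r with
      | false => let n := eval compute in (size l) in
                 let l' := eval cbv beta iota fix delta [rcons] in (rcons l t) in
                 constr:((At n, l'))
      | _ => constr:((At r, l))
      end
  end.

Ltac solve_hom hbil hmult hanti hchar :=
  lazymatch goal with
  | |- @eq _ ?lhs ?rhs =>
    lazymatch type of hmult with @hom_multiplicative _ ?mul ?alpha =>
    let A := type of lhs in
    let p := reify mul alpha lhs (@nil A) in
    lazymatch p with (?e1, ?l1) =>
    let q := reify mul alpha rhs l1 in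
    lazymatch q with (?e2, ?l2) =>
    let l2' := eval simpl in l2 in
    change (eval mul alpha l2' e1 = eval mul alpha l2' e2);
    apply: (sound hchar hbil hmult hanti); vm_compute; reflexivity
    end end end
  end.

Theorem lemma2p4 (K : fieldType) (A : lmodType K)
  (mul : A -> A -> A) (alpha : {linear A -> A})
  (hchar : [pchar K] =i pred0)
  (hbil : bilinear_prod mul)
  (hmult : hom_multiplicative mul alpha)
  (hanti : anticommutative mul) :
  (* (i) skew-symmetry of J_alpha in its three variables *)
  (forall x y z : A,
     homJ mul alpha y x z = - homJ mul alpha x y z /\
     homJ mul alpha x z y = - homJ mul alpha x y z /\
     homJ mul alpha z y x = - homJ mul alpha x y z) /\
  (* (ii) *)
  (forall w x y z : A,
     let J := homJ mul alpha in
     let a2 := fun u => alpha (alpha u) in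
     mul (a2 w) (J x y z) - mul (a2 x) (J y z w)
       + mul (a2 y) (J z w x) - mul (a2 z) (J w x y)
     = J (mul w x) (alpha y) (alpha z) + J (mul y z) (alpha w) (alpha x)
       + J (mul w y) (alpha z) (alpha x) + J (mul z x) (alpha w) (alpha y)
       - J (mul z w) (alpha x) (alpha y) - J (mul x y) (alpha z) (alpha w)).
Proof.
split.
  move=> x y z; rewrite /homJ; split; [|split]; solve_hom hbil hmult hanti hchar.
move=> w x y z J a2; rewrite /J /a2 /homJ; solve_hom hbil hmult hanti hchar.
Qed.
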